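(* Let $N\ge1$, and let $A_n\to A$ in $M_N(\mathbb{C})$. Then $\liminf_{n\to\infty}\psi(A_n)\ge\psi(A)$.
   Context: $M_N(\mathbb{C})$ denotes the algebra of complex $N\times N$ matrices acting on $\mathbb{C}^N$ with the Euclidean inner product, equipped with the operator norm. For $A\in M_N(\mathbb{C})$, the numerical range is $W(A):=\{\langle Ax,x\rangle: x\in\mathbb{C}^N,\ \|x\|=1\}$. The Crouzeix ratio of $A$ is $\psi(A):=\sup\{\|p(A)\|: p \text{ a polynomial with } |p|\le 1 \text{ on } W(A)\}$. *)

(* Defs.v *)
From HB Require Import structures.
From mathcomp Require Import all_boot all_order all_algebra.
From mathcomp Require Import all_classical all_reals all_analysis.
From mathcomp Require Import complex.
Set Implicit Arguments. Unset Strict Implicit. Unset Printing Implicit Defensive.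
Import Order.TTheory GRing.Theory Num.Theory.
Local Open Scope ring_scope.
Local Open Scope classical_set_scope.

Section Crouzeix.
Variable R : realType.
Local Notation C := (complex R).

Definition cmod (z : C) : R := ComplexField.Normc.normc z.

Definition cinner N (x y : 'cV[C]_N) : C := \sum_(i < N) x i ord0 * (y i ord0)^*.

Definition vnorm N (x : 'cV[C]_N) : R := Num.sqrt (\sum_(i < N) cmod (x i ord0) ^+ 2).

Definition opnorm N (M : 'M[C]_N) : \bar R :=
  ereal_sup [set ((vnorm (M *m x))%:E) | x in [set x : 'cV[C]_N | vnorm x = 1]].

Definition numrange N (A : 'M[C]_N) : set C :=
  [set cinner (A *m x) x | x in [set x : 'cV[C]_N | vnorm x = 1]].

Definition peval_mx N (p : {poly C}) (A : 'M[C]_N) : 'M[C]_N :=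
  \sum_(i < size p) p`_i *: A ^+ i.

Definition crouzeix_ratio N (A : 'M[C]_N) : \bar R :=
  ereal_sup [set opnorm (peval_mx p A) |
               p in [set p : {poly C} | forall z, numrange A z -> cmod p.[z] <= 1]].
End Crouzeix.

(* Main.v *)
Require Import Defs.
From HB Require Import structures.
From mathcomp Require Import all_boot all_order all_algebra.
From mathcomp Require Import all_classical all_reals all_analysis.
From mathcomp Require Import complex.
From mathcomp Require Import ring lra.
Import Order.TTheory GRing.Theory Num.Theory.
Local Open Scope ring_scope.
Local Open Scope classical_set_scope.
Set Implicit Arguments. Unset Strict Implicit.
Section S.
Variable R : realType.
Local Notation C := (complex R).

Lemma cmodE (z : C) : `|z| = ((cmod z)%:C)%C. Proof. by []. Qed.
Lemma cmod_ge0 (z : C) : 0 <= cmod z.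
Proof. by case: z => a b; exact: sqrtr_ge0. Qed.
Lemma cmodD (a b : C) : cmod (a + b) <= cmod a + cmod b.
Proof. exact: le_normcD. Qed.
Lemma cmodM (a b : C) : cmod (a * b) = cmod a * cmod b.
Proof. by apply: ComplexField.Normc.normcM. Qed.
Lemma cmodN (a : C) : cmod (- a) = cmod a.
Proof. by apply: normcN. Qed.
Lemma cmod0 : cmod (0 : C) = 0.
Proof. by apply: ComplexField.Normc.normc0. Qed.
Lemma cmod1 : cmod (1 : C) = 1.
Proof. by apply: ComplexField.Normc.normc1. Qed.
Lemma cmodJ (a : C) : cmod (a^*) = cmod a.
Proof. by apply: complexI; rewrite -!cmodE norm_conjC. Qed.
Lemma cmodR (r : R) : cmod (r%:C)%C = `|r|.
Proof. by apply: complexI; rewrite -cmodE normc_def /= expr0n /= addr0 sqrtr_sqr. Qed.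
Lemma cmodX (a : C) n : cmod (a ^+ n) = cmod a ^+ n.
Proof. by apply: complexI; rewrite -cmodE normrX cmodE rmorphXn. Qed.
Lemma cmod_sum I (r : seq I) (P : pred I) (F : I -> C) :
  cmod (\sum_(i <- r | P i) F i) <= \sum_(i <- r | P i) cmod (F i).
Proof.
elim/big_rec2: _ => [|i y1 y2 _ Hy]; first by rewrite cmod0.
by apply: le_trans (cmodD _ _) _; rewrite lerD2l.
Qed.
Lemma cmodB_ge (a b : C) : cmod a - cmod b <= cmod (a - b).
Proof.
have := cmodD (a - b) b; rewrite subrK. by rewrite lerBlDr.
Qed.
Definition en m n (M : 'M[C]_(m,n)) : R := \sum_i \sum_j cmod (M i j).
Arguments en {m n}.

Lemma en_ge0 m n (M : 'M[C]_(m,n)) : 0 <= en M.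
Proof. by apply: sumr_ge0 => i _; apply: sumr_ge0 => j _; exact: cmod_ge0. Qed.

Lemma en_row m n (M : 'M[C]_(m,n)) k : \sum_j cmod (M k j) <= en M.
Proof.
rewrite /en (bigD1 k) //= lerDl; apply: sumr_ge0 => i _; apply: sumr_ge0 => j _; exact: cmod_ge0.
Qed.

Lemma en_entry m n (M : 'M[C]_(m,n)) i j : cmod (M i j) <= en M.
Proof.
apply: (@le_trans _ _ (\sum_j cmod (M i j))); last exact: en_row; rewrite (bigD1 j) //= lerDl.
by apply: sumr_ge0 => k _; exact: cmod_ge0.
Qed.

Lemma enD m n (M P : 'M[C]_(m,n)) : en (M + P) <= en M + en P.
Proof.
rewrite /en -big_split /=; apply: ler_sum => i _; rewrite -big_split /=.
by apply: ler_sum => j _; rewrite mxE; exact: cmodD.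
Qed.

Lemma enN m n (M : 'M[C]_(m,n)) : en (- M) = en M.
Proof. by apply: eq_bigr => i _; apply: eq_bigr => j _; rewrite mxE cmodN. Qed.

Lemma enZ m n (c : C) (M : 'M[C]_(m,n)) : en (c *: M) = cmod c * en M.
Proof.
rewrite /en mulr_sumr; apply: eq_bigr => i _; rewrite mulr_sumr.
by apply: eq_bigr => j _; rewrite mxE cmodM.
Qed.

Lemma enM m n p (M : 'M[C]_(m,n)) (P : 'M[C]_(n,p)) : en (M *m P) <= en M * en P.
Proof.
rewrite /en mulr_suml; apply: ler_sum => i _.
apply: (@le_trans _ _ (\sum_j \sum_k cmod (M i k) * cmod (P k j))).
  apply: ler_sum => j _; rewrite mxE; apply: le_trans (cmod_sum _ _ _) _.
  by apply: ler_sum => k _; rewrite cmodM.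
rewrite exchange_big /= mulr_suml; apply: ler_sum => k _.
rewrite -mulr_sumr; apply: ler_wpM2l; first exact: cmod_ge0.
exact: en_row.
Qed.

Lemma en_mulvec m n (M : 'M[C]_(m,n)) (x : 'cV[C]_n) i :
  (forall k, cmod (x k 0) <= 1) -> cmod ((M *m x) i 0) <= en M.
Proof.
move=> Hx; apply: (@le_trans _ _ (\sum_j cmod (M i j))); last exact: en_row; rewrite mxE.
apply: le_trans (cmod_sum _ _ _) _; apply: ler_sum => k _.
rewrite cmodM -[X in _ <= X]mulr1; apply: ler_wpM2l; [exact: cmod_ge0|exact: Hx].
Qed.

Lemma en1 n : en (1%:M : 'M[C]_n) = n%:R.
Proof.
rewrite /en -[n in RHS]card_ord -sumr_const; apply: eq_bigr => i _.
rewrite (bigD1 i) //= big1 ?addr0; first by rewrite mxE eqxx cmod1.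
by move=> j Hj; rewrite mxE eq_sym (negbTE Hj) cmod0.
Qed.
Lemma powLip (z w : C) (K : R) i : 1 <= K -> cmod z <= K -> cmod w <= K ->
  cmod (z ^+ i - w ^+ i) <= i%:R * K ^+ i * cmod (z - w).
Proof.
move=> K1 Hz Hw; elim: i => [|i IH]; first by rewrite !expr0 subrr cmod0 !mul0r.
have -> : z ^+ i.+1 - w ^+ i.+1 = z * (z ^+ i - w ^+ i) + (z - w) * w ^+ i.
  by rewrite !exprS mulrBr mulrBl addrA subrK.
apply: le_trans (cmodD _ _) _; rewrite !cmodM cmodX.
have h1 := cmod_ge0 z; have h2 := cmod_ge0 (z ^+ i - w ^+ i).
have h3 := cmod_ge0 (z - w); have h4 := cmod_ge0 w.
have hKi : 1 <= K ^+ i by rewrite exprn_ege1.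
have hwi : cmod w ^+ i <= K ^+ i by rewrite lerXn2r // ?nnegrE //; lra.
have hwi0 : 0 <= cmod w ^+ i by rewrite exprn_ge0.
rewrite exprS -natr1.
set d := cmod (z - w) in h3 IH *; set a := K ^+ i in hKi hwi IH *.
set b := cmod (z ^+ i - w ^+ i) in h2 IH *; set c := cmod w ^+ i in hwi hwi0 *.
set y := cmod z in h1 Hz *.
have hi : 0 <= (i%:R : R) by [].
have p1 : y * b <= K * b by apply: ler_wpM2r.
have p2 : K * b <= K * (i%:R * a * d) by apply: ler_wpM2l => //; lra.
have p3 : d * c <= d * a by apply: ler_wpM2l.
have p4 : 0 <= d * a * (K - 1) by apply: mulr_ge0; [apply: mulr_ge0 => //; lra| lra].
nra.
Qed.

Lemma en_pow n (A : 'M[C]_n) (K : R) i : 1 <= K -> en A <= K -> en (A ^+ i) <= n%:R * K ^+ i.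
Proof.
move=> K1 HA; elim: i => [|i IH]; first by rewrite expr0 expr0 mulr1 en1.
rewrite exprS -mulmxE; apply: le_trans (enM _ _) _.
rewrite exprS mulrCA; apply: ler_pM => //; [exact: en_ge0| exact: en_ge0].
Qed.

Lemma powLipM n (B A : 'M[C]_n) (K : R) i : 1 <= K -> en B <= K -> en A <= K ->
  en (B ^+ i - A ^+ i) <= i%:R * n%:R * K ^+ i * en (B - A).
Proof.
move=> K1 HB HA; elim: i => [|i IH]; first by rewrite !expr0 subrr !mul0r /en big1 // => i _; rewrite big1 // => j _; rewrite mxE cmod0.
have -> : B ^+ i.+1 - A ^+ i.+1 = B *m (B ^+ i - A ^+ i) + (B - A) *m A ^+ i.
  by rewrite !exprS !mulmxE mulrBr mulrBl addrA subrK.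
apply: le_trans (enD _ _) _.
have e1 := enM B (B ^+ i - A ^+ i); have e2 := enM (B - A) (A ^+ i).
have hAi := en_pow i K1 HA.
have h1 := en_ge0 B; have h2 := en_ge0 (B ^+ i - A ^+ i).
have h3 := en_ge0 (B - A); have h4 := en_ge0 (A ^+ i).
have hKi : 1 <= K ^+ i by rewrite exprn_ege1.
rewrite exprS -natr1.
set d := en (B - A) in h3 IH e2 *; set a := K ^+ i in hKi hAi IH *.
set b := en (B ^+ i - A ^+ i) in h2 IH e1 *; set c := en (A ^+ i) in hAi h4 e2 *.
set y := en B in h1 HB e1 *.
have hi : 0 <= (i%:R : R) by [].
have hn : 0 <= (n%:R : R) by [].
have p1 : y * b <= K * b by apply: ler_wpM2r.
have p2 : K * b <= K * (i%:R * n%:R * a * d) by apply: ler_wpM2l => //; lra.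
have p3 : d * c <= d * (n%:R * a) by apply: ler_wpM2l.
have hK1 : 0 <= K - 1 by lra.
have ha : 0 <= a by lra.
have p4 : 0 <= d * n%:R * a * (K - 1) by rewrite !mulr_ge0.
nra.
Qed.
Lemma en0 m n : en (0 : 'M[C]_(m,n)) = 0.
Proof. by rewrite /en big1 // => i _; rewrite big1 // => j _; rewrite mxE cmod0. Qed.

Lemma en_sum m n I (r : seq I) (P : pred I) (F : I -> 'M[C]_(m,n)) :
  en (\sum_(i <- r | P i) F i) <= \sum_(i <- r | P i) en (F i).
Proof.
elim/big_rec2: _ => [|i y1 y2 _ Hy]; first by rewrite en0.
by apply: le_trans (enD _ _) _; rewrite lerD2l.
Qed.

Definition L1 (p : {poly C}) (K : R) := \sum_(i < size p) cmod p`_i * (i%:R * K ^+ i).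
Definition L2 n (p : {poly C}) (K : R) := \sum_(i < size p) cmod p`_i * (i%:R * n%:R * K ^+ i).

Lemma L1_ge0 p K : 0 <= K -> 0 <= L1 p K.
Proof. move=> K0; apply: sumr_ge0 => i _; rewrite !mulr_ge0 ?cmod_ge0 ?exprn_ge0 //. Qed.
Lemma L2_ge0 n p K : 0 <= K -> 0 <= L2 n p K.
Proof. move=> K0; apply: sumr_ge0 => i _; rewrite !mulr_ge0 ?cmod_ge0 ?exprn_ge0 //. Qed.

Lemma polyLip (p : {poly C}) (z w : C) (K : R) : 1 <= K -> cmod z <= K -> cmod w <= K ->
  cmod (p.[z] - p.[w]) <= L1 p K * cmod (z - w).
Proof.
move=> K1 Hz Hw; rewrite !horner_coef -sumrB /L1 mulr_suml.
apply: le_trans (cmod_sum _ _ _) _; apply: ler_sum => i _.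
rewrite -mulrBr cmodM -mulrA; apply: ler_wpM2l; first exact: cmod_ge0.
exact: powLip.
Qed.

Lemma polyLipM n (p : {poly C}) (B A : 'M[C]_n) (K : R) : 1 <= K -> en B <= K -> en A <= K ->
  en (peval_mx p B - peval_mx p A) <= L2 n p K * en (B - A).
Proof.
move=> K1 HB HA; rewrite /peval_mx -sumrB /L2 mulr_suml.
apply: le_trans (en_sum _ _ _) _; apply: ler_sum => i _.
rewrite -scalerBr enZ -mulrA; apply: ler_wpM2l; first exact: cmod_ge0.
exact: powLipM.
Qed.
Lemma vnorm_ge0 n (x : 'cV[C]_n) : 0 <= vnorm x.
Proof. exact: sqrtr_ge0. Qed.

Lemma sumsq_ge0 n (x : 'cV[C]_n) : 0 <= \sum_(i < n) cmod (x i 0) ^+ 2.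
Proof. by apply: sumr_ge0 => i _; rewrite sqr_ge0. Qed.

Lemma entry_le_vnorm n (x : 'cV[C]_n) i : cmod (x i 0) <= vnorm x.
Proof.
rewrite -[cmod _]ger0_norm ?cmod_ge0 // -sqrtr_sqr /vnorm ler_sqrt ?sumsq_ge0 //.
rewrite (bigD1 i) //= lerDl; apply: sumr_ge0 => k _; exact: sqr_ge0.
Qed.

Lemma unit_entry n (x : 'cV[C]_n) : vnorm x = 1 -> forall k, cmod (x k 0) <= 1.
Proof. by move=> Hx k; rewrite -Hx; exact: entry_le_vnorm. Qed.

Lemma vnormZ n (c : C) (y : 'cV[C]_n) : vnorm (c *: y) = cmod c * vnorm y.
Proof.
rewrite /vnorm.
have -> : \sum_(i < n) cmod ((c *: y) i 0) ^+ 2 = cmod c ^+ 2 * \sum_(i < n) cmod (y i 0) ^+ 2.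
  by rewrite mulr_sumr; apply: eq_bigr => i _; rewrite mxE cmodM exprMn.
by rewrite sqrtrM ?sqr_ge0 // sqrtr_sqr ger0_norm ?cmod_ge0.
Qed.

Lemma vnorm_delta n (j : 'I_n) : vnorm (delta_mx j 0 : 'cV[C]_n) = 1.
Proof.
rewrite /vnorm (bigD1 j) //= big1 ?addr0; first by rewrite mxE !eqxx cmod1 expr1n sqrtr1.
by move=> k Hk; rewrite mxE (negbTE Hk) cmod0 expr0n.
Qed.

Lemma opnorm_ge n (M : 'M[C]_n) (x : 'cV[C]_n) : vnorm x = 1 ->
  ((vnorm (M *m x))%:E <= opnorm M)%E.
Proof. by move=> Hx; apply: ereal_sup_ubound; exists x. Qed.

Lemma opnorm_entry n (M : 'M[C]_n) i j : ((cmod (M i j))%:E <= opnorm M)%E.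
Proof.
apply: le_trans (opnorm_ge M (vnorm_delta j)).
by rewrite lee_fin -colE; have := entry_le_vnorm (col j M) i; rewrite mxE.
Qed.

Lemma cinner_bound n (M : 'M[C]_n) (x : 'cV[C]_n) : vnorm x = 1 ->
  cmod (cinner (M *m x) x) <= en M.
Proof.
move=> Hx; have Hk := unit_entry Hx.
apply: le_trans (cmod_sum _ _ _) _; rewrite /en; apply: ler_sum => i _.
rewrite cmodM cmodJ; apply: le_trans (_ : cmod ((M *m x) i 0) * 1 <= _).
  by apply: ler_wpM2l; [exact: cmod_ge0| exact: Hk].
rewrite mulr1 mxE; apply: le_trans (cmod_sum _ _ _) _; apply: ler_sum => k _.
rewrite cmodM -[X in _ <= X]mulr1; apply: ler_wpM2l; [exact: cmod_ge0|exact: Hk].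
Qed.

Lemma cinnerB n (B A : 'M[C]_n) (x : 'cV[C]_n) :
  cinner (B *m x) x - cinner (A *m x) x = cinner ((B - A) *m x) x.
Proof.
rewrite /cinner -sumrB; apply: eq_bigr => i _.
by rewrite mulmxBl !mxE mulrBl.
Qed.

Lemma vnorm_perturb n (u v : 'cV[C]_n) (d B t : R) :
  (forall i, cmod (u i 0 - v i 0) <= d) -> (forall i, cmod (v i 0) <= B) ->
  0 <= d -> 0 < t -> n%:R * (2 * d * B) <= t ^+ 2 -> vnorm v - t <= vnorm u.
Proof.
move=> Hd HB d0 t0 Ht.
have [vt|tv] := leP (vnorm v) t.
  by apply: le_trans (vnorm_ge0 u); lra.
have key : forall i, cmod (v i 0) ^+ 2 - 2 * d * B <= cmod (u i 0) ^+ 2.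
  move=> i; have h1 : cmod (v i 0) - cmod (u i 0) <= cmod (u i 0 - v i 0).
    by rewrite -[cmod (u i 0 - v i 0)]cmodN opprB; exact: cmodB_ge.
  have h2 := Hd i; have h3 := HB i.
  have h4 := cmod_ge0 (u i 0); have h5 := cmod_ge0 (v i 0).
  set a := cmod (u i 0) in h1 h4 *; set b := cmod (v i 0) in h1 h3 h5 *.
  set e := cmod (u i 0 - v i 0) in h1 h2.
  have [bd|db] := leP b d; first nra.
  nra.
have S : \sum_(i < n) cmod (v i 0) ^+ 2 - t ^+ 2 <= \sum_(i < n) cmod (u i 0) ^+ 2.
  apply: le_trans (ler_sum _ (fun i _ => key i)).
  rewrite sumrB sumr_const card_ord lerD2l lerN2; rewrite mulr_natl in Ht; exact: Ht.
have v0 := vnorm_ge0 v.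
have Sv : vnorm v ^+ 2 = \sum_(i < n) cmod (v i 0) ^+ 2 by rewrite sqr_sqrtr ?sumsq_ge0.
rewrite -[X in X <= _]ger0_norm; last by lra.
rewrite -sqrtr_sqr {2}/vnorm ler_sqrt ?sumsq_ge0 //; apply: le_trans S.
rewrite -Sv; move: (vnorm v) tv v0 => a ta a0; nra.
Qed.
Lemma small (X c d : R) : 0 <= X -> 0 <= c -> 0 <= d -> d <= c / (X + 1) -> X * d <= c.
Proof.
move=> X0 c0 d0; rewrite ler_pdivlMr; last by lra.
move=> H; nra.
Qed.

Lemma en_le_op n (M : 'M[C]_n) (r : R) : (opnorm M <= r%:E)%E -> en M <= (n * n)%:R * r.
Proof.
move=> H; apply: (@le_trans _ _ (\sum_(i < n) \sum_(j < n) r)).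
  apply: ler_sum => i _; apply: ler_sum => j _; rewrite -lee_fin.
  exact: le_trans (opnorm_entry M i j) H.
by rewrite !sumr_const card_ord -mulrnA mulr_natl.
Qed.

Lemma hyp_near n (A_ : nat -> 'M[C]_n) (A : 'M[C]_n) :
  (fun k => opnorm (A_ k - A)) @ \oo --> 0%E ->
  forall eta : R, 0 < eta -> \forall k \near \oo, en (A_ k - A) <= eta.
Proof.
move=> /fine_cvgP [Hfin Hcv] eta eta0.
pose r := eta / ((n * n)%:R + 1).
have k0 : 0 < (n * n)%:R + 1 :> R by rewrite ltr_wpDl.
have r0 : 0 < r by rewrite divr_gt0.
have Hd0 := cvgr_dist_lt _ _ Hcv _ r0.
near=> k.
have Hf : opnorm (A_ k - A) \is a fin_num by near: k; exact: Hfin.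
have Hd : `|0 - (fine \o (fun k => opnorm (A_ k - A))) k| < r by near: k; exact: Hd0.
apply: le_trans (en_le_op (r := r) _) _.
  rewrite -(fineK Hf) lee_fin; apply: le_trans (ltW Hd).
  by rewrite sub0r normrN ler_norm.
rewrite -[X in _ <= X](mulr1 eta) /r mulrCA ler_wpM2l ?(ltW eta0) //.
rewrite ler_pdivrMr // mul1r; lra.
Unshelve. all: by end_near.
Qed.

Lemma peval_scale n (c : C) (p : {poly C}) (M : 'M[C]_n) : c != 0 ->
  peval_mx (c *: p) M = c *: peval_mx p M.
Proof.
move=> c0; rewrite /peval_mx size_scale // scaler_sumr; apply: eq_bigr => i _.
by rewrite coefZ scalerA.
Qed.
Lemma main_step n (A_ : nat -> 'M[C]_n) (A : 'M[C]_n) (p : {poly C}) (x : 'cV[C]_n) :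
  (fun k => opnorm (A_ k - A)) @ \oo --> 0%E ->
  (forall z, numrange A z -> cmod p.[z] <= 1) -> vnorm x = 1 ->
  forall e : R, 0 < e ->
  \forall k \near \oo, ((vnorm (peval_mx p A *m x) - e)%:E <= crouzeix_ratio (A_ k))%E.
Proof.
move=> Hc Hp Hx e e0.
set K := en A + 2.
have K1 : 1 <= K by have := en_ge0 A; rewrite /K; lra.
set l1 := L1 p K. set l2 := L2 n p K. set B := en (peval_mx p A).
set v := vnorm (peval_mx p A *m x). set t := e / 2.
have t0 : 0 < t by rewrite /t divr_gt0.
have et : e = t + t by rewrite /t -splitr.
have l10 : 0 <= l1 by apply: L1_ge0; lra.
have l20 : 0 <= l2 by apply: L2_ge0; lra.
have B0 : 0 <= B by exact: en_ge0.
have v0 : 0 <= v by exact: vnorm_ge0.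
set X2 := n%:R * (2 * l2 * B). have X20 : 0 <= X2 by rewrite /X2 !mulr_ge0.
set X3 := v * l1. have X30 : 0 <= X3 by rewrite mulr_ge0.
have eta2 : 0 < t ^+ 2 / (X2 + 1) by rewrite divr_gt0 ?exprn_gt0 //; lra.
have eta3 : 0 < t / (X3 + 1) by rewrite divr_gt0 //; lra.
near=> k.
have H1 : en (A_ k - A) <= 1 by near: k; exact: hyp_near.
have H2 : en (A_ k - A) <= t ^+ 2 / (X2 + 1) by near: k; exact: hyp_near.
have H3 : en (A_ k - A) <= t / (X3 + 1) by near: k; exact: hyp_near.
have d0 : 0 <= en (A_ k - A) by exact: en_ge0.
have S2 : X2 * en (A_ k - A) <= t ^+ 2 by apply: small => //; exact: sqr_ge0.
have S3 : X3 * en (A_ k - A) <= t by apply: small => //; lra.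
have HAk : en (A_ k) <= K.
  have -> : A_ k = A + (A_ k - A) by rewrite addrC subrK.
  apply: le_trans (enD _ _) _; rewrite /K; lra.
have HA : en A <= K by rewrite /K; lra.
have Hadm : forall z, numrange (A_ k) z -> cmod p.[z] <= 1 + l1 * en (A_ k - A).
  move=> z [y Hy <-].
  have Hw : numrange A (cinner (A *m y) y) by exists y.
  have Hpw := Hp _ Hw.
  have Hz := cinner_bound (A_ k) Hy. have Hw' := cinner_bound A Hy.
  have Hl := polyLip p K1 (le_trans Hz HAk) (le_trans Hw' HA).
  rewrite -/l1 in Hl.
  have Hzw : cmod (cinner (A_ k *m y) y - cinner (A *m y) y) <= en (A_ k - A).
    by rewrite cinnerB; exact: cinner_bound.
  have Htri := cmodD (p.[cinner (A *m y) y]) (p.[cinner (A_ k *m y) y] - p.[cinner (A *m y) y]).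
  rewrite addrC subrK in Htri.
  have Hm : l1 * cmod (cinner (A_ k *m y) y - cinner (A *m y) y) <= l1 * en (A_ k - A).
    exact: ler_wpM2l.
  lra.
set d := en (A_ k - A) in H1 H2 H3 d0 S2 S3 Hadm *.
set c := (1 + l1 * d)^-1.
have c0 : 0 < c by rewrite invr_gt0; have := mulr_ge0 l10 d0; lra.
have cC0 : (c%:C)%C != 0 :> C.
  by apply/eqP => /(congr1 (@complex.Re R)) /=; lra.
have cmc : cmod (c%:C)%C = c by rewrite cmodR ger0_norm // ltW.
set q := (c%:C)%C *: p.
have Hq : forall z, numrange (A_ k) z -> cmod q.[z] <= 1.
  move=> z Hz; rewrite hornerZ cmodM cmc.
  have h := Hadm z Hz.
  rewrite mulrC ler_pdivrMr ?mul1r //; have := mulr_ge0 l10 d0; lra.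
have Hpsi : (opnorm (peval_mx q (A_ k)) <= crouzeix_ratio (A_ k))%E.
  by apply: ereal_sup_ubound; exists q.
have Hop := opnorm_ge (peval_mx q (A_ k)) Hx.
rewrite peval_scale // -scalemxAl vnormZ cmc in Hop.
rewrite /q peval_scale // in Hpsi.
set u := peval_mx p (A_ k) *m x in Hop.
have Hs : v - t <= vnorm u.
  apply: (@vnorm_perturb _ _ _ (l2 * d) B).
  - move=> i.
    have -> : u i 0 - (peval_mx p A *m x) i 0 = ((peval_mx p (A_ k) - peval_mx p A) *m x) i 0.
      by rewrite mulmxBl !mxE.
    apply: le_trans (en_mulvec _ _ (unit_entry Hx)) _; exact: polyLipM.
  - by move=> i; exact: (en_mulvec _ _ (unit_entry Hx)).
  - by rewrite mulr_ge0.
  - exact: t0.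
  - have -> : n%:R * (2 * (l2 * d) * B) = X2 * d by rewrite /X2; ring.
    exact: S2.
suff Hfin : ((v - e)%:E <= (c * vnorm u)%:E)%E by exact: le_trans Hfin (le_trans Hop Hpsi).
rewrite lee_fin.
rewrite /c mulrC ler_pdivlMr; last by have := mulr_ge0 l10 d0; lra.
have h1 : 0 <= e * l1 * d by rewrite !mulr_ge0 // ltW.
rewrite /X3 in S3.
nra.
Unshelve. all: by end_near.
Qed.
End S.

Unset Implicit Arguments.

Lemma liminf_ge (R : realType) (u : nat -> \bar R) (a : \bar R) :
  (\forall n \near \oo, (a <= u n)%E) -> (a <= limn_einf u)%E.
Proof.
case=> n0 _ Hn0.
rewrite limn_einf_lim.
have -> : limn (einfs u) = ereal_sup (range (einfs u)).
  exact/cvg_lim/cvg_einfs_sup.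
apply: (@le_trans _ _ (einfs u n0)); last by apply: ereal_sup_ubound; exists n0.
apply/ereal_infP => y [k /= Hk <-]; exact: Hn0.
Qed.

Theorem theorem2p1 (R : realType) (N : nat) (hN : (1 <= N)%N)
    (A_ : nat -> 'M[complex R]_N) (A : 'M[complex R]_N) :
  (fun n => opnorm (A_ n - A)) @ \oo --> 0%E ->
  (crouzeix_ratio A <= limn_einf (fun n => crouzeix_ratio (A_ n)))%E.
Proof.
move=> Hc.
apply: ub_ereal_sup => _ [p Hp <-].
apply: ub_ereal_sup => _ [x Hx <-].
apply/lee_addgt0Pr => e e0.
have H := @liminf_ge R _ _ (main_step Hc Hp Hx e0).
by rewrite EFinB leeBlDr // in H.
Qed.
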